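(* Consider a slotted system with diversity. There are $N$ users, $N_{sub}\ge2$ sub-carriers and slots $1,\dots,T$, where $0<\alpha<1$, $\alpha T\in\mathbb Z$ and $(1-\alpha)T$ is even. The BS uses pmfs $\mathbf p$ on users and $\mathbf q$ on sub-carriers: in every slot, independently, it chooses user $i$ with probability $p_i$ and sub-carrier $j$ with probability $q_j$, and transmits to that user on that sub-carrier. An adversarial blocking matrix is $\sigma\in\{0,1\}^{N_{sub}\times T}$, where $\sigma_j(t)=0$ means sub-carrier $j$ is blocked in slot $t$. It is feasible if $\sum_{j,t}(1-\sigma_j(t))\le\alpha T$ and at most one sub-carrier is blocked per slot. Ages satisfy $a_i(1)=1$, $a_i(t+1)=1$ if user $i$ is chosen in slot $t$ on an unblocked sub-carrier, and $a_i(t+1)=a_i(t)+1$ otherwise. The payoff is $\Delta^{\mathbf p,\mathbf q,\sigma}=\frac1T\sum_{t=1}^T\frac1N\sum_i\mathbb E[a_i(t)]$; the BS minimizes it and the adversary maximizes it. Let $\sigma'$ be the adversarial strategy that, in each slot $t\in\{\frac{(1-\alpha)T}2+1,\dots,\frac{(1+\alpha)T}2\}$, blocks one sub-carrier chosen uniformly at random (independently), and blocks nothing in other slots. Let $\bar{\mathbf p}$ and $\bar{\mathbf q}$ be the uniform pmfs. Then $(\bar{\mathbf p},\bar{\mathbf q},\sigma')$ is a Nash equilibrium. That is: - $(\bar{\mathbf p},\bar{\mathbf q})$ minimizes $\Delta^{\mathbf p,\mathbf q,\sigma'}$ over all pmfs $\mathbf p,\mathbf q$; and - $\sigma'$ attains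 $\max_{\sigma\text{ feasible}}\Delta^{\bar{\mathbf p},\bar{\mathbf q},\sigma}$.
   Context: The expectation under $\sigma'$ includes the adversary's randomness. *)

(* Defs.v *)
From HB Require Import structures.
From mathcomp Require Import all_boot all_order all_algebra.
Set Implicit Arguments. Unset Strict Implicit. Unset Printing Implicit Defensive.
Import Order.TTheory GRing.Theory Num.Theory.
Local Open Scope ring_scope.

Section AoI.
Variables (R : realFieldType) (N Nsub T : nat).

Definition is_pmf (I : finType) (p : I -> R) : Prop :=
  (forall i, 0 <= p i) /\ \sum_i p i = 1.

Definition uniform_pmf (I : finType) : I -> R := fun _ => (#|I|%:R)^-1.

(* blocking matrix: sigma j t = true  <=>  sigma_j(t) = 1 (sub-carrier j NOT blocked
   in slot t); slots are 0-indexed: t : 'I_T stands for slot t+1. *)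
Definition blocking := 'I_Nsub -> 'I_T -> bool.

Definition feasible (alpha : R) (sigma : blocking) : Prop :=
  ((\sum_(j : 'I_Nsub) \sum_(t : 'I_T) (~~ sigma j t : nat))%:R <= alpha * T%:R)
  /\ (forall t : 'I_T, #|[set j | ~~ sigma j t]| <= 1)%N.

Definition bs_outcome := {ffun 'I_T -> 'I_N * 'I_Nsub}.

Definition bs_prob (p : 'I_N -> R) (q : 'I_Nsub -> R) (w : bs_outcome) : R :=
  \prod_(t : 'I_T) (p (w t).1 * q (w t).2).

Definition served (sigma : blocking) (w : bs_outcome) (i : 'I_N) (k : nat) : bool :=
  [exists t : 'I_T, [&& val t == k, (w t).1 == i & sigma (w t).2 t]].

(* age a_i(k+1) (k 0-indexed): a_i(1) = 1, a_i(t+1) = 1 if served in t, else a_i(t)+1 *)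
Fixpoint age (sigma : blocking) (w : bs_outcome) (i : 'I_N) (k : nat) : nat :=
  match k with
  | 0 => 1
  | k'.+1 => if served sigma w i k' then 1 else (age sigma w i k').+1
  end.

Definition exp_age (p : 'I_N -> R) (q : 'I_Nsub -> R) (sigma : blocking)
  (i : 'I_N) (k : nat) : R :=
  \sum_(w : bs_outcome) bs_prob p q w * (age sigma w i k)%:R.

Definition Delta (p : 'I_N -> R) (q : 'I_Nsub -> R) (sigma : blocking) : R :=
  (T%:R)^-1 * \sum_(t : 'I_T) ((N%:R)^-1 * \sum_(i : 'I_N) exp_age p q sigma i t).

(* the randomized adversary sigma': independent uniform sub-carrier per slot;
   in slot t (0-indexed) inside the window [(1-a)T/2, (1+a)T/2) the chosen
   sub-carrier is blocked, otherwise nothing is blocked *)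
Definition in_window (alpha : R) (t : 'I_T) : bool :=
  ((1 - alpha) * T%:R / 2 <= t%:R) && (t%:R + 1 <= (1 + alpha) * T%:R / 2).

Definition adv_outcome := {ffun 'I_T -> 'I_Nsub}.

Definition sigma' (alpha : R) (v : adv_outcome) : blocking :=
  fun j t => ~~ (in_window alpha t && (v t == j)).

Definition Delta_sigma' (alpha : R) (p : 'I_N -> R) (q : 'I_Nsub -> R) : R :=
  \sum_(v : adv_outcome) (\prod_(t : 'I_T) (Nsub%:R)^-1) * Delta p q (sigma' alpha v).

End AoI.
Arguments Delta_sigma' {R N Nsub} T.
Arguments Delta {R N Nsub} T.
Arguments feasible {R Nsub T}.
Arguments is_pmf {R I}.
Arguments uniform_pmf {R}.

(* Main.v *)
Require Import Defs.
From HB Require Import structures.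
From mathcomp Require Import all_boot all_order all_algebra.
From mathcomp Require Import zify ring lra.
Set Implicit Arguments. Unset Strict Implicit. Unset Printing Implicit Defensive.
Import Order.TTheory GRing.Theory Num.Theory.
Local Open Scope ring_scope.

Section Core.
Variables (R : realFieldType) (b d : R).
Variable z : nat -> bool.

Definition xs s := b + d * (z s)%:R.
Definition Pc a c := \prod_(a <= s < c) xs s.
Fixpoint Ac c := if c is c'.+1 then 1 + xs c' * Ac c' else 1.
Definition Sc n := \sum_(0 <= i < n.+1) b ^+ i.
Definition cnt a c := (\sum_(a <= s < c) z s)%N.

Lemma P_recr a c : (a <= c)%N -> Pc a c.+1 = Pc a c * xs c.
Proof. by move=> h; rewrite /Pc big_nat_recr. Qed.

Lemma P_nil a : Pc a a = 1.
Proof. by rewrite /Pc big_geq. Qed.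

Lemma A_sum c : \sum_(0 <= a < c.+1) Pc a c = Ac c.
Proof.
elim: c => [|c IH]; first by rewrite big_nat1 P_nil.
rewrite big_nat_recr //= P_nil -IH big_distrr /= addrC; congr (_ + _).
by apply: eq_big_nat => a /andP[_ ha]; rewrite P_recr // mulrC.
Qed.

Lemma S_rec n : Sc n.+1 = 1 + b * Sc n.
Proof.
rewrite /Sc big_ltn // expr0 big_distrr /=; congr (_ + _).
by rewrite -(add0n 1%N) big_addn subn1 /=; apply: eq_big_nat => i _; rewrite addn1 exprS.
Qed.

Lemma I1 c : Ac c = Sc c + \sum_(0 <= v < c) Ac v * (d * (z v)%:R) * b ^+ (c - v.+1).
Proof.
elim: c => [|c IH]; first by rewrite big_geq // addr0 /Sc big_nat1.
rewrite /= S_rec big_nat_recr //= subnn expr0 mulr1.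
have -> : \sum_(0 <= v < c) Ac v * (d * (z v)%:R) * b ^+ (c.+1 - v.+1)
   = b * \sum_(0 <= v < c) Ac v * (d * (z v)%:R) * b ^+ (c - v.+1).
  rewrite big_distrr /=; apply: eq_big_nat => v /andP[_ hv].
  have -> : (c.+1 - v.+1 = (c - v.+1).+1)%N by lia.
  by rewrite exprS; ring.
rewrite IH /xs; ring.
Qed.

Lemma I2 v : Ac v = Sc v + \sum_(0 <= u < v) Sc u * (d * (z u)%:R) * Pc u.+1 v.
Proof.
elim: v => [|v IH]; first by rewrite big_geq // addr0 /Sc big_nat1.
rewrite /= S_rec big_nat_recr //= P_nil mulr1.
have -> : \sum_(0 <= u < v) Sc u * (d * (z u)%:R) * Pc u.+1 v.+1
   = xs v * \sum_(0 <= u < v) Sc u * (d * (z u)%:R) * Pc u.+1 v.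
  rewrite big_distrr /=; apply: eq_big_nat => u /andP[_ hu].
  by rewrite P_recr //; ring.
rewrite IH /xs; ring.
Qed.


Lemma tri_swap (f : nat -> nat -> R) n :
  \sum_(0 <= c < n) \sum_(0 <= v < c) f v c = \sum_(0 <= v < n) \sum_(v.+1 <= c < n) f v c.
Proof.
elim: n => [|n IH]; first by rewrite !big_geq.
rewrite big_nat_recr //= IH [in RHS]big_nat_recr //= [X in _ = _ + X]big_geq // addr0.
rewrite -big_split /=; apply: eq_big_nat => v /andP[_ hv].
by rewrite big_nat_recr.
Qed.

Lemma Sr_eq Mc v : (v < Mc)%N -> \sum_(v.+1 <= c < Mc.+1) b ^+ (c - v.+1) = Sc (Mc - v.+1).
Proof.
move=> hv; rewrite /Sc -(add0n v.+1) big_addn.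
have -> : (Mc.+1 - v.+1 = (Mc - v.+1).+1)%N by lia.
by apply: eq_big_nat => i _; rewrite addnK.
Qed.

Definition Gc Mc := \sum_(0 <= c < Mc.+1) Ac c.

Lemma G_decomp Mc : Gc Mc = \sum_(0 <= c < Mc.+1) Sc c
  + d * \sum_(0 <= v < Mc) (z v)%:R * (Sc v * Sc (Mc - v.+1))
  + d ^+ 2 * \sum_(0 <= v < Mc) (z v)%:R * (Sc (Mc - v.+1) *
        \sum_(0 <= u < v) (z u)%:R * (Sc u * Pc u.+1 v)).
Proof.
rewrite /Gc (eq_big_nat _ _ (fun c _ => I1 c)) big_split /= tri_swap -addrA; congr (_ + _).
rewrite big_nat_recr //= [X in _ + X = _]big_geq // addr0.
rewrite !big_distrr -big_split /=; apply: eq_big_nat => v /andP[_ hv].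
rewrite -big_distrr /= Sr_eq // I2.
have -> : \sum_(0 <= u < v) Sc u * (d * (z u)%:R) * Pc u.+1 v
   = d * \sum_(0 <= u < v) (z u)%:R * (Sc u * Pc u.+1 v).
  by rewrite big_distrr; apply: eq_big_nat => u _ /=; ring.
ring.
Qed.


Lemma cnt_recr a c : (a <= c)%N -> cnt a c.+1 = (cnt a c + z c)%N.
Proof. by move=> h; rewrite /cnt big_nat_recr. Qed.

Lemma cnt_ltn a c : (a < c)%N -> cnt a c = (z a + cnt a.+1 c)%N.
Proof. by move=> h; rewrite /cnt big_ltn. Qed.

Lemma cnt_nil a : cnt a a = 0%N.
Proof. by rewrite /cnt big_geq. Qed.

Lemma cnt_le a c : (cnt a c <= c - a)%N.
Proof.
rewrite /cnt; elim: c => [|c IH]; first by rewrite big_geq.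
case: (leqP a c) => h; last by rewrite big_geq //.
rewrite big_nat_recr //=; case: (z c) => /=; lia.
Qed.

Lemma cnt_split a m c : (a <= m)%N -> (m <= c)%N -> cnt a c = (cnt a m + cnt m c)%N.
Proof. by move=> h1 h2; rewrite /cnt (big_cat_nat h1 h2). Qed.

Lemma rank_below (g : nat -> R) lo hi : (lo <= hi)%N ->
  \sum_(lo <= v < hi) (z v)%:R * g (cnt lo v) = \sum_(0 <= r < cnt lo hi) g r.
Proof.
elim: hi => [|hi IH] h.
  have -> : lo = 0%N by lia.
  by rewrite !big_geq // cnt_nil.
case: (ltnP hi lo) => h'.
  have -> : lo = hi.+1 by lia.
  by rewrite cnt_nil !big_geq.
rewrite big_nat_recr //= IH // cnt_recr //.
case: (z hi) => /=; last by rewrite mul0r addr0 addn0.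
by rewrite mul1r addn1 big_nat_recr.
Qed.

Lemma rank_above (g : nat -> R) lo hi : (lo <= hi)%N ->
  \sum_(lo <= u < hi) (z u)%:R * g (cnt u.+1 hi) = \sum_(0 <= r < cnt lo hi) g r.
Proof.
move=> h; have [n hn] : exists n, (lo + n = hi)%N by exists (hi - lo)%N; lia.
elim: n lo hn {h} => [|n IH] lo hn.
  by rewrite addn0 in hn; subst; rewrite cnt_nil !big_geq.
rewrite big_ltn; last by lia.
rewrite IH; last by lia.
rewrite (cnt_ltn (a := lo)); last by lia.
case: (z lo) => /=; last by rewrite mul0r add0r.
by rewrite mul1r add1n big_nat_recr //= addrC.
Qed.


Lemma S_recr n : Sc n.+1 = Sc n + b ^+ n.+1.
Proof. by rewrite /Sc big_nat_recr. Qed.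

Lemma sum_swap (f : nat -> nat -> R) Mc :
  \sum_(0 <= v < Mc) (z v)%:R * \sum_(0 <= r < cnt 0 v) f r v
  = \sum_(0 <= r < Mc) \sum_(0 <= v < Mc) ((z v && (r.+1 <= cnt 0 v)%N) : nat)%:R * f r v.
Proof.
rewrite [RHS]exchange_big_nat /=.
apply: eq_big_nat => v /andP[_ hv].
rewrite (big_nat_widen _ _ Mc); last by have := cnt_le 0 v; lia.
rewrite big_mkcond big_distrr /=; apply: eq_big_nat => r _.
by case: (z v); case: (r < cnt 0 v)%N => /=; rewrite ?mul1r ?mul0r.
Qed.


End Core.

Section CoreH.
Variables (R : realFieldType) (b d : R).
Hypotheses (hb0 : 0 <= b) (hd0 : 0 <= d) (hg1 : b + d <= 1).
Variable z : nat -> bool.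
Local Notation xs := (xs b d z).
Local Notation Pc := (Pc b d z).
Local Notation Sc := (Sc b).
Local Notation cnt := (cnt z).

Lemma xs_ge0 s : 0 <= xs s.
Proof. by rewrite /xs; apply: addr_ge0 => //; apply: mulr_ge0. Qed.

Lemma xs_le1 s : xs s <= 1.
Proof. rewrite /xs; case: (z s) => /=; first by rewrite mulr1. 
by rewrite mulr0 addr0; apply: le_trans hg1; rewrite lerDl. Qed.

Lemma S_ge0 n : 0 <= Sc n.
Proof. by apply: sumr_ge0 => i _; apply: exprn_ge0. Qed.

Lemma b_le1 : b <= 1.
Proof. by apply: le_trans hg1; rewrite lerDl. Qed.

Lemma S_mono m n : (m <= n)%N -> Sc m <= Sc n.
Proof.
elim: n => [|n IH] h; first by have -> : m = 0%N by lia.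
case: (ltnP n m) => h'; first by have -> : m = n.+1 by lia.
by rewrite S_recr; apply: le_trans (IH h') _; rewrite lerDl exprn_ge0.
Qed.

Lemma S_step a c : (a <= c)%N -> Sc a * Sc c.+1 <= Sc a.+1 * Sc c.
Proof.
move=> h; rewrite !S_recr mulrDr mulrDl lerD2l.
rewrite [X in _ <= X]mulrC; apply: ler_pM.
- exact: S_ge0.
- exact: exprn_ge0.
- exact: S_mono.
- by apply: (ler_wiXn2l hb0 b_le1).
Qed.

Lemma S_t t a c : (a + t <= c)%N -> Sc a * Sc (c + t) <= Sc (a + t) * Sc c.
Proof.
elim: t a => [|t IH] a h; first by rewrite !addn0.
apply: le_trans (_ : Sc a.+1 * Sc (c + t) <= _).
  by rewrite addnS; apply: S_step; lia.
have -> : (a + t.+1 = a.+1 + t)%N by lia.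
by apply: IH; lia.
Qed.

Lemma S_mono2 a c a' c' : (a + c = a' + c')%N -> (a <= a')%N -> (a <= c')%N ->
  Sc a * Sc c <= Sc a' * Sc c'.
Proof.
move=> he h1 h2.
wlog hac : a' c' he h1 h2 / (a' <= c')%N.
  move=> W; case: (leqP a' c') => h; first exact: W.
  rewrite [X in _ <= X]mulrC; apply: W; lia.
have [t ht] : exists t, a' = (a + t)%N by exists (a' - a)%N; lia.
subst a'; have -> : c = (c' + t)%N by lia.
by apply: S_t; lia.
Qed.


Lemma P_ge0 a c : 0 <= Pc a c.
Proof. by apply: prodr_ge0 => s _; apply: xs_ge0. Qed.

Lemma P_le a c : Pc a c <= (b + d) ^+ cnt a c.
Proof.
rewrite /Pc /cnt -prodrXr; apply: ler_prod => s _; rewrite xs_ge0 /xs /=.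
by case: (z s) => /=; rewrite ?mulr1 ?expr1 ?mulr0 ?addr0 ?expr0 // b_le1.
Qed.

Lemma inner_bound v :
  \sum_(0 <= u < v) (z u)%:R * (Sc u * Pc u.+1 v)
  <= \sum_(0 <= r < cnt 0 v) (b + d) ^+ r * Sc (v - r.+1).
Proof.
rewrite -(rank_above z (fun r => (b + d) ^+ r * Sc (v - r.+1))) //.
apply: ler_sum_nat => u /andP[_ hu]; apply: ler_wpM2l => //.
rewrite mulrC; apply: ler_pM; [exact: P_ge0 | exact: S_ge0 | exact: P_le|].
apply: S_mono; have := cnt_le z u.+1 v; lia.
Qed.


End CoreH.

Lemma Ac_ext (R : realFieldType) (b d : R) (z1 z2 : nat -> bool) c :
  (forall s, (s < c)%N -> z1 s = z2 s) -> Ac b d z1 c = Ac b d z2 c.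
Proof.
elim: c => [|c IH] h //=.
rewrite IH; last by move=> s hs; apply: h; lia.
by rewrite /xs h.
Qed.

Lemma Gc_ext (R : realFieldType) (b d : R) (z1 z2 : nat -> bool) M :
  (forall s, (s < M)%N -> z1 s = z2 s) -> Gc b d z1 M = Gc b d z2 M.
Proof.
move=> h; apply: eq_big_nat => c /andP[_ hc]; apply: Ac_ext => s hs; apply: h; lia.
Qed.


Lemma sum_ind (R : realFieldType) (a c n : nat) :
  \sum_(0 <= v < n) (((a <= v)%N && (v < c)%N) : nat)%:R = ((minn n c - a)%N)%:R :> R.
Proof.
elim: n => [|n IH]; first by rewrite big_geq // min0n sub0n.
rewrite big_nat_recr //= IH -natrD; apply/eqP; rewrite eqr_nat; apply/eqP.
case: (leqP a n) => h1; case: (ltnP n c) => h2 /=; lia.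
Qed.

Lemma block (R : realFieldType) (X K : nat -> bool) (phi : nat -> R) (c : R) n :
  0 <= c ->
  \sum_(0 <= v < n) (X v : nat)%:R <= \sum_(0 <= v < n) (K v : nat)%:R :> R ->
  (forall v, (v < n)%N -> X v -> ~~ K v -> phi v <= c) ->
  (forall v, (v < n)%N -> K v -> ~~ X v -> c <= phi v) ->
  \sum_(0 <= v < n) (X v : nat)%:R * phi v <= \sum_(0 <= v < n) (K v : nat)%:R * phi v.
Proof.
move=> hc hcard h1 h2.
have E : forall Y : nat -> bool, \sum_(0 <= v < n) (Y v : nat)%:R * phi v
   = \sum_(0 <= v < n) (Y v : nat)%:R * (phi v - c) + c * \sum_(0 <= v < n) (Y v : nat)%:R.
  move=> Y; rewrite big_distrr -big_split /=; apply: eq_big_nat => v _; ring.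
rewrite !E; apply: lerD; last exact: ler_wpM2l.
apply: ler_sum_nat => v /andP[_ hv].
case hX: (X v); case hK: (K v) => /=; rewrite ?mul1r ?mul0r //.
- by rewrite subr_le0; apply: h1 => //; rewrite hK.
- by rewrite subr_ge0; apply: h2 => //; rewrite hX.
Qed.


Section Window.
Variables (R : realFieldType) (b d : R).
Hypotheses (hb0 : 0 <= b) (hd0 : 0 <= d) (hg1 : b + d <= 1).
Variables (k L : nat).
Hypothesis hk : (0 < k)%N.

Definition Mc := (2 * k + L).-1.
Definition wc v := (k <= v)%N && (v < k + L)%N.
Definition psi dd v := Sc b (v - dd) * Sc b (Mc - v.+1).

Lemma cnt_w0 v : (v <= k + L)%N -> cnt wc 0 v = (v - k)%N.
Proof.
elim: v => [|v IH] h; first by rewrite cnt_nil.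
rewrite cnt_recr // IH; last by lia.
rewrite /wc; case: (leqP k v) => h1 /=; lia.
Qed.

Lemma cnt_wuv u v : (k <= u)%N -> (u < v)%N -> (v <= k + L)%N -> cnt wc u.+1 v = (v - u.+1)%N.
Proof.
move=> h1 h2 h3; have := cnt_split wc (a := 0) (m := u.+1) (c := v) (leq0n _) h2.
rewrite !cnt_w0; lia.
Qed.

Lemma P_w u v : (k <= u)%N -> (v <= k + L)%N -> Pc b d wc u.+1 v = (b + d) ^+ (v - u.+1).
Proof.
move=> h1 h2; rewrite /Pc -prodr_const_nat; apply: eq_big_nat => s /andP[hs1 hs2].
have hw : ((k <= s)%N && (s < k + L)%N) = true by apply/andP; split; lia.
by rewrite /xs /wc hw mulr1.
Qed.


Lemma inner_eq_w v : wc v ->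
  \sum_(0 <= u < v) (wc u)%:R * (Sc b u * Pc b d wc u.+1 v)
  = \sum_(0 <= r < cnt wc 0 v) (b + d) ^+ r * Sc b (v - r.+1).
Proof.
move=> /andP[hv1 hv2].
rewrite -(rank_above wc (fun r => (b + d) ^+ r * Sc b (v - r.+1))) //.
apply: eq_big_nat => u /andP[_ hu].
case hwu: (wc u); rewrite ?mul0r // !mul1r.
move: hwu => /andP[hu1 hu2].
rewrite cnt_wuv // ?P_w //; try lia.
have -> : (v - (v - u.+1).+1 = u)%N by lia.
by rewrite mulrC.
Qed.

Lemma blk (z : nat -> bool) dd : (cnt z 0 Mc <= L)%N ->
  \sum_(0 <= v < Mc) ((z v && (dd <= cnt z 0 v)%N) : nat)%:R * psi dd v
  <= \sum_(0 <= v < Mc) ((wc v && (dd <= cnt wc 0 v)%N) : nat)%:R * psi dd v.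
Proof.
move=> hL.
have -> : \sum_(0 <= v < Mc) ((wc v && (dd <= cnt wc 0 v)%N) : nat)%:R * psi dd v
  = \sum_(0 <= v < Mc) ((((k + dd) <= v)%N && (v < k + L)%N) : nat)%:R * psi dd v.
  apply: eq_big_nat => v /andP[_ hv]; congr (_%:R * _).
  rewrite /wc; case: (leqP k v) => h1 /=; last by (have -> : (k + dd <= v)%N = false by lia).
  case: (ltnP v (k + L)) => h2 /=; last by rewrite andbF.
  rewrite cnt_w0; last by lia.
  have -> : (dd <= v - k)%N = (k + dd <= v)%N by apply/idP/idP; lia.
  by rewrite andbT.
apply: (block (c := Sc b k.-1 * Sc b (Mc - k - dd))).
- by apply: mulr_ge0; apply: S_ge0.
- rewrite sum_ind.
  have -> : \sum_(0 <= v < Mc) ((z v && (dd <= cnt z 0 v)%N) : nat)%:R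
      = \sum_(0 <= v < Mc) (z v)%:R * ((dd <= cnt z 0 v)%N : nat)%:R :> R.
    by apply: eq_big_nat => v _; case: (z v); rewrite /= ?mul1r ?mul0r.
  rewrite (rank_below z (fun r => ((dd <= r)%N : nat)%:R)) //.
  have -> : \sum_(0 <= r < cnt z 0 Mc) ((dd <= r)%N : nat)%:R
     = \sum_(0 <= r < cnt z 0 Mc) (((dd <= r)%N && (r < cnt z 0 Mc)%N) : nat)%:R :> R.
    by apply: eq_big_nat => r /andP[_ hr]; rewrite hr andbT.
  rewrite sum_ind ler_nat; rewrite /Mc in hL *; lia.
- move=> v hv /andP[hz hdd] hK.
  have hc := cnt_split z (a := 0) (m := v) (c := Mc) (leq0n _) (ltnW hv).
  have hcv := cnt_le z 0 v.
  rewrite /psi; case: (ltnP v (k + dd)) => h.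
    apply: (S_mono2 hb0 hd0 hg1) => //; rewrite /Mc in hv hc hL *; lia.
  rewrite mulrC; apply: (S_mono2 hb0 hd0 hg1) => //; rewrite /Mc in hv hc hL *; lia.
- move=> v hv /andP[h1 h2] _; rewrite /psi.
  apply: (S_mono2 hb0 hd0 hg1) => //; rewrite /Mc in hv *; lia.
Qed.


Definition Zs (z : nat -> bool) :=
  \sum_(0 <= v < Mc) (z v)%:R * \sum_(0 <= r < cnt z 0 v) ((b + d) ^+ r * psi r.+1 v).

Lemma X1_rw (z : nat -> bool) v :
  \sum_(0 <= r < cnt z 0 v) ((b + d) ^+ r * psi r.+1 v)
  = Sc b (Mc - v.+1) * \sum_(0 <= r < cnt z 0 v) (b + d) ^+ r * Sc b (v - r.+1).
Proof. by rewrite big_distrr; apply: eq_big_nat => r _ /=; rewrite /psi; ring. Qed.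

Lemma X1_le (z : nat -> bool) :
  \sum_(0 <= v < Mc) (z v)%:R * (Sc b (Mc - v.+1) *
        \sum_(0 <= u < v) (z u)%:R * (Sc b u * Pc b d z u.+1 v)) <= Zs z.
Proof.
apply: ler_sum_nat => v _; apply: ler_wpM2l => //; rewrite X1_rw.
by apply: ler_wpM2l; [exact: S_ge0 | exact: inner_bound].
Qed.

Lemma X1_eq :
  \sum_(0 <= v < Mc) (wc v)%:R * (Sc b (Mc - v.+1) *
        \sum_(0 <= u < v) (wc u)%:R * (Sc b u * Pc b d wc u.+1 v)) = Zs wc.
Proof.
apply: eq_big_nat => v _; rewrite X1_rw.
by case hw: (wc v); rewrite ?mul0r // inner_eq_w.
Qed.

Lemma Zs_eq (z : nat -> bool) : Zs z = \sum_(0 <= r < Mc) (b + d) ^+ r *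
   \sum_(0 <= v < Mc) ((z v && (r.+1 <= cnt z 0 v)%N) : nat)%:R * psi r.+1 v.
Proof.
rewrite /Zs (sum_swap z (fun r v => (b + d) ^+ r * psi r.+1 v)).
by apply: eq_big_nat => r _; rewrite big_distrr; apply: eq_big_nat => v _ /=; ring.
Qed.

Lemma X0_rw (z : nat -> bool) :
  \sum_(0 <= v < Mc) (z v)%:R * (Sc b v * Sc b (Mc - v.+1))
  = \sum_(0 <= v < Mc) ((z v && (0 <= cnt z 0 v)%N) : nat)%:R * psi 0 v.
Proof. by apply: eq_big_nat => v _; rewrite /psi subn0 andbT. Qed.

Theorem core_main (y : nat -> bool) : (cnt y 0 Mc <= L)%N -> Gc b d y Mc <= Gc b d wc Mc.
Proof.
move=> hL; rewrite !G_decomp; apply: lerD; first apply: lerD => //.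
  by apply: ler_wpM2l => //; rewrite !X0_rw; apply: blk.
apply: ler_wpM2l; first exact: exprn_ge0.
apply: le_trans (X1_le y) _; rewrite X1_eq !Zs_eq.
apply: ler_sum_nat => r _; apply: ler_wpM2l; first by apply: exprn_ge0; apply: addr_ge0.
exact: blk.
Qed.

End Window.

Lemma lin (R : realFieldType) (V K I : finType) (W : V -> R) (c1 c2 : R) (n : K -> nat)
  (F : V -> K -> I -> nat -> R) :
  \sum_v W v * (c1 * \sum_k (c2 * \sum_i \sum_(0 <= a < n k) F v k i a))
  = c1 * \sum_k (c2 * \sum_i \sum_(0 <= a < n k) \sum_v W v * F v k i a).
Proof.
have -> : \sum_v W v * (c1 * \sum_k (c2 * \sum_i \sum_(0 <= a < n k) F v k i a))
   = \sum_v c1 * \sum_k (c2 * \sum_i \sum_(0 <= a < n k) W v * F v k i a).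
  apply: eq_bigr => v _; rewrite mulrCA; congr (_ * _).
  rewrite big_distrr; apply: eq_bigr => k _ /=; rewrite mulrCA; congr (_ * _).
  rewrite big_distrr; apply: eq_bigr => i _ /=; rewrite big_distrr //.
rewrite -big_distrr /=; congr (_ * _).
rewrite exchange_big /=; apply: eq_bigr => k _.
rewrite -big_distrr /=; congr (_ * _).
rewrite exchange_big /=; apply: eq_bigr => i _.
by rewrite exchange_big.
Qed.

Section Tangent.
Variables (R : realFieldType) (I : Type) (P : pred I) (cc : I -> R).
Hypothesis hc : forall t, 0 <= cc t <= 1.

Definition Pr r x := \prod_(t <- r | P t) (1 - x * cc t).
Fixpoint Dr (r : seq I) (y : R) : R := match r with
  | [::] => 0
  | t :: r' => if P t then - cc t * Pr r' y + (1 - y * cc t) * Dr r' y else Dr r' y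
  end.

Lemma fac_ge0 x t : 0 <= x <= 1 -> 0 <= 1 - x * cc t.
Proof.
move=> /andP[h0 h1]; have /andP[c0 c1] := hc t.
by rewrite subr_ge0; apply: mulr_ile1.
Qed.

Lemma Pr_ge0 r x : 0 <= x <= 1 -> 0 <= Pr r x.
Proof. by move=> hx; apply: prodr_ge0 => t _; apply: fac_ge0. Qed.

Lemma Dr_le0 r y : 0 <= y <= 1 -> Dr r y <= 0.
Proof.
move=> hy; elim: r => [|t r IH] //=; case: (P t) => //.
have /andP[c0 c1] := hc t.
have h2 : (1 - y * cc t) * Dr r y <= 0 by apply: mulr_ge0_le0 => //; apply: fac_ge0.
have h1 : 0 <= cc t * Pr r y by apply: mulr_ge0 => //; apply: Pr_ge0.
rewrite mulNr; lra.
Qed.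

Lemma tangent r x y : 0 <= x <= 1 -> 0 <= y <= 1 -> Pr r y + Dr r y * (x - y) <= Pr r x.
Proof.
move=> hx hy; elim: r => [|t r IH]; first by rewrite /Pr !big_nil /= mul0r addr0.
rewrite /Pr !big_cons /=; case: (P t) => //.
rewrite -/(Pr r y) -/(Pr r x).
have hD := Dr_le0 r hy; have /andP[c0 c1] := hc t.
apply: le_trans (_ : _ <= (1 - x * cc t) * (Pr r y + Dr r y * (x - y))) _; last first.
  by apply: ler_wpM2l => //; apply: fac_ge0.
rewrite -subr_ge0.
have -> : (1 - x * cc t) * (Pr r y + Dr r y * (x - y)) -
   ((1 - y * cc t) * Pr r y + (- cc t * Pr r y + (1 - y * cc t) * Dr r y) * (x - y))
   = cc t * (- Dr r y) * ((x - y) * (x - y)) by ring.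
apply: mulr_ge0; last by rewrite -expr2 sqr_ge0.
by apply: mulr_ge0 => //; rewrite oppr_ge0.
Qed.

End Tangent.

Section Prob.
Variables (R : realFieldType) (N Nsub T : nat).

Lemma age_eq (sigma : blocking Nsub T) (w : bs_outcome N Nsub T) i k :
  (age sigma w i k)%:R = \sum_(0 <= a < k.+1) \prod_(a <= s < k) ((~~ served sigma w i s) : nat)%:R :> R.
Proof.
elim: k => [|k IH]; first by rewrite big_nat1 big_geq.
rewrite big_nat_recr //= [X in _ + X]big_geq //.
have -> : \sum_(0 <= a < k.+1) \prod_(a <= s < k.+1) ((~~ served sigma w i s) : nat)%:R
   = ((~~ served sigma w i k) : nat)%:R * \sum_(0 <= a < k.+1) \prod_(a <= s < k) ((~~ served sigma w i s) : nat)%:R :> R.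
  rewrite big_distrr; apply: eq_big_nat => a /andP[_ ha] /=.
  by rewrite big_nat_recr // mulrC.
rewrite -IH; case: (served sigma w i k) => /=; first by rewrite mul0r add0r.
by rewrite mul1r -addn1 natrD.
Qed.

Lemma served_ord (sigma : blocking Nsub T) (w : bs_outcome N Nsub T) i (t : 'I_T) :
  served sigma w i t = ((w t).1 == i) && sigma (w t).2 t.
Proof.
apply/existsP/idP => [[t' /and3P[/eqP e h1 h2]]|h].
  have et : t = t' by apply: val_inj.
  by rewrite et h1 h2.
by exists t; rewrite eqxx.
Qed.

Lemma prod_nat_ord (F : nat -> R) a k : (k <= T)%N ->
  \prod_(a <= s < k) F s = \prod_(t : 'I_T | (a <= t)%N && (t < k)%N) F t.
Proof.
move=> hk; rewrite (big_nat_widen _ _ T) // big_geq_mkord.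
by apply: eq_bigl => t /=; rewrite andbC.
Qed.


Lemma sum_pair (F : 'I_N -> 'I_Nsub -> R) :
  \sum_(x : 'I_N * 'I_Nsub) F x.1 x.2 = \sum_i \sum_j F i j.
Proof. by rewrite pair_bigA. Qed.

Lemma exp_age_eq (p : 'I_N -> R) (q : 'I_Nsub -> R) (sigma : blocking Nsub T) i k :
  \sum_i p i = 1 -> \sum_j q j = 1 -> (k <= T)%N ->
  exp_age p q sigma i k = \sum_(0 <= a < k.+1)
     \prod_(t : 'I_T | (a <= t)%N && (t < k)%N) (1 - p i * \sum_j q j * (sigma j t : nat)%:R).
Proof.
move=> hp hq hk; rewrite /exp_age.
under eq_bigr do rewrite age_eq big_distrr.
rewrite exchange_big /=; apply: eq_big_nat => a _.
have E : forall w : bs_outcome N Nsub T,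
  bs_prob p q w * \prod_(a <= s < k) ((~~ served sigma w i s) : nat)%:R
  = \prod_t (p (w t).1 * q (w t).2 *
      (if (a <= t)%N && (t < k)%N then ((~~ (((w t).1 == i) && sigma (w t).2 t)) : nat)%:R else 1)).
  move=> w; rewrite prod_nat_ord // big_mkcond /bs_prob -big_split /=.
  by apply: eq_bigr => t _; case: ifP => //; rewrite served_ord.
under eq_bigr do rewrite E.
rewrite -(bigA_distr_bigA (fun (t : 'I_T) (x : 'I_N * 'I_Nsub) => p x.1 * q x.2 *
      (if (a <= t)%N && (t < k)%N then ((~~ ((x.1 == i) && sigma x.2 t)) : nat)%:R else 1))).
rewrite [RHS]big_mkcond; apply: eq_bigr => t _ /=.
rewrite (sum_pair (fun i0 j => p i0 * q j *
      (if (a <= t)%N && (t < k)%N then ((~~ ((i0 == i) && sigma j t)) : nat)%:R else 1))).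
case: ifP => _.
  have Hr : forall i0 j, p i0 * q j * ((~~ ((i0 == i) && sigma j t)) : nat)%:R
      = p i0 * q j - (if i0 == i then p i0 * (q j * (sigma j t : nat)%:R) else 0).
    move=> i0 j; case: (i0 == i); case: (sigma j t) => /=; ring.
  rewrite (eq_bigr (fun i0 => \sum_j (p i0 * q j - (if i0 == i then p i0 * (q j * (sigma j t : nat)%:R) else 0)))); last first.
    by move=> i0 _; apply: eq_bigr => j _; rewrite Hr.
  under eq_bigr do rewrite sumrB.
  rewrite sumrB.
  under [X in X - _ = _]eq_bigr do rewrite -big_distrr /= hq mulr1.
  rewrite hp; congr (_ - _).
  rewrite (bigD1 i) //= eqxx [X in _ + X]big1 ?addr0; last first.
    by move=> i0 /negbTE h; rewrite big1 // => j _; rewrite h.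
  by rewrite big_distrr.
under eq_bigr do under eq_bigr do rewrite mulr1.
under eq_bigr do rewrite -big_distrr /= hq mulr1.
exact: hp.
Qed.


Lemma avg (c : pred 'I_T) (f : 'I_T -> 'I_Nsub -> R) : (0 < Nsub)%N ->
  \sum_(v : adv_outcome Nsub T) (\prod_(t : 'I_T) (Nsub%:R)^-1) * \prod_(t | c t) f t (v t)
  = \prod_(t | c t) ((Nsub%:R)^-1 * \sum_j f t j).
Proof.
move=> hN.
have E : forall v : adv_outcome Nsub T, (\prod_(t : 'I_T) (Nsub%:R)^-1) * \prod_(t | c t) f t (v t)
   = \prod_t ((Nsub%:R)^-1 * (if c t then f t (v t) else 1)).
  by move=> v; rewrite [X in _ * X]big_mkcond /= -big_split.
rewrite (eq_bigr _ (fun v _ => E v)).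
rewrite -(bigA_distr_bigA (fun (t : 'I_T) (j : 'I_Nsub) => (Nsub%:R)^-1 * (if c t then f t j else 1))).
rewrite [RHS]big_mkcond; apply: eq_bigr => t _ /=.
case: (c t) => /=; first by rewrite big_distrr.
rewrite -big_distrr /= sumr_const card_ord -[(1 : R) *+ Nsub]mulr_natl mulr1 mulVf //.
by rewrite pnatr_eq0 -lt0n.
Qed.

Lemma avg_val (alpha x : R) (q : 'I_Nsub -> R) (t : 'I_T) : (0 < Nsub)%N -> \sum_j q j = 1 ->
  (Nsub%:R)^-1 * \sum_(j : 'I_Nsub) (1 - x * \sum_j' q j' * ((~~ (in_window alpha t && (j == j'))) : nat)%:R)
  = 1 - x * (1 - (in_window alpha t : nat)%:R / Nsub%:R).
Proof.
move=> hN hq.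
have E : forall j : 'I_Nsub, \sum_j' q j' * ((~~ (in_window alpha t && (j == j'))) : nat)%:R
   = 1 - (in_window alpha t : nat)%:R * q j.
  move=> j; case: (in_window alpha t) => /=.
    rewrite mul1r -[in RHS]hq (bigD1 j) //= [in RHS](bigD1 j) //= eqxx mulr0 add0r.
    rewrite [X in X = _](eq_bigr (fun j' => q j')); last first.
      by move=> j' hj; rewrite eq_sym (negbTE hj) /= mulr1.
    by rewrite addrC addrK.
  by rewrite mul0r subr0 -[RHS]hq; apply: eq_bigr => j' _; rewrite /= mulr1.
under eq_bigr do rewrite E.
rewrite (eq_bigr (fun i => (1 - x) + (x * (in_window alpha t : nat)%:R) * q i)); last by move=> i _; ring.
rewrite big_split /= sumr_const card_ord -big_distrr /= hq mulr1.
have hN' : (Nsub%:R : R) != 0 by rewrite pnatr_eq0 -lt0n.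
rewrite -mulr_natr; field.
exact: hN'.
Qed.


Definition cc (alpha : R) (t : 'I_T) : R := 1 - (in_window alpha t : nat)%:R / Nsub%:R.
Definition Phi alpha x := \sum_(k : 'I_T) \sum_(0 <= a < k.+1)
   \prod_(t : 'I_T | (a <= t)%N && (t < k)%N) (1 - x * cc alpha t).

Lemma DS_eq alpha (p : 'I_N -> R) (q : 'I_Nsub -> R) :
  \sum_i p i = 1 -> \sum_j q j = 1 -> (0 < Nsub)%N ->
  Delta_sigma' T alpha p q = (T%:R)^-1 * ((N%:R)^-1 * \sum_i Phi alpha (p i)).
Proof.
move=> hp hq hN; rewrite /Delta_sigma'.
have E : forall v : adv_outcome Nsub T, Delta T p q (sigma' alpha v) = (T%:R)^-1 * \sum_(k : 'I_T) ((N%:R)^-1 *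
   \sum_i \sum_(0 <= a < k.+1) \prod_(t : 'I_T | (a <= t)%N && (t < k)%N)
      (1 - p i * \sum_j q j * (sigma' alpha v j t : nat)%:R)).
  move=> v; rewrite /Delta; congr (_ * _); apply: eq_bigr => k _; congr (_ * _).
  by apply: eq_bigr => i _; apply: exp_age_eq => //; exact: ltnW (ltn_ord k).
rewrite (eq_bigr _ (fun v _ => congr1 (fun X => _ * X) (E v))).
rewrite lin; congr (_ * _).
rewrite -big_distrr /=; congr (_ * _).
rewrite exchange_big /=; apply: eq_bigr => i _; apply: eq_bigr => k _.
apply: eq_big_nat => a _; rewrite /sigma'.
rewrite (avg (fun t => (a <= t)%N && (t < k)%N)
   (fun t j => 1 - p i * \sum_j' q j' * ((~~ (in_window alpha t && (j == j'))) : nat)%:R)) //.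
by apply: eq_bigr => t _; rewrite avg_val.
Qed.

Lemma cc_bound alpha t : (0 < Nsub)%N -> 0 <= cc alpha t <= 1.
Proof.
move=> hN; rewrite /cc; case: (in_window alpha t) => /=; last by rewrite mul0r subr0 ler01 lexx.
have h0 : (0 : R) < Nsub%:R by rewrite ltr0n.
rewrite mul1r subr_ge0 invf_le1 // ler1n hN /= lerBlDr lerDl invr_ge0 ltW //.
Qed.

Definition DPhi alpha y := \sum_(k : 'I_T) \sum_(0 <= a < k.+1)
   Dr (fun t : 'I_T => (a <= t)%N && (t < k)%N) (cc alpha) (index_enum 'I_T) y.

Lemma Phi_tangent alpha x y : (0 < Nsub)%N -> 0 <= x <= 1 -> 0 <= y <= 1 ->
  Phi alpha y + DPhi alpha y * (x - y) <= Phi alpha x.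
Proof.
move=> hN hx hy; rewrite /Phi /DPhi big_distrl -big_split /=.
apply: ler_sum => k _; rewrite big_distrl -big_split /=.
apply: ler_sum_nat => a _.
by apply: (tangent (fun t : 'I_T => (a <= t)%N && (t < k)%N)) => // t; apply: cc_bound.
Qed.

Lemma unif_sum (I : finType) : (0 < #|I|)%N -> \sum_(i : I) uniform_pmf I i = 1 :> R.
Proof.
move=> h; rewrite /uniform_pmf sumr_const -[X in X = _]mulr_natl mulfV //.
by rewrite pnatr_eq0 -lt0n.
Qed.

Lemma pmf_le1 (I : finType) (p : I -> R) i : is_pmf p -> 0 <= p i <= 1.
Proof.
move=> [h0 h1]; rewrite h0 /= -h1 (bigD1 i) //= lerDl.
by apply: sumr_ge0 => j _.
Qed.

Lemma part1 alpha (p : 'I_N -> R) (q : 'I_Nsub -> R) : (0 < N)%N -> (0 < Nsub)%N ->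
  is_pmf p -> is_pmf q ->
  Delta_sigma' T alpha (uniform_pmf 'I_N) (uniform_pmf 'I_Nsub) <= Delta_sigma' T alpha p q.
Proof.
move=> hN hNs hp hq.
rewrite !DS_eq //; try (by case: hp); try (by case: hq); try (by apply: unif_sum; rewrite card_ord).
apply: ler_wpM2l; first by rewrite invr_ge0 ler0n.
apply: ler_wpM2l; first by rewrite invr_ge0 ler0n.
have hy : 0 <= (N%:R : R)^-1 <= 1.
  by rewrite invr_ge0 ler0n /= invf_le1 ?ltr0n // ler1n.
rewrite /uniform_pmf card_ord.
apply: le_trans (_ : _ <= \sum_i (Phi alpha (N%:R^-1) + DPhi alpha (N%:R^-1) * (p i - N%:R^-1))) _.
  rewrite big_split /= -big_distrr /= sumrB.
  rewrite [X in _ - X]sumr_const card_ord -[X in _ - X]mulr_natl mulfV ?pnatr_eq0 -?lt0n //.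
  by case: hp => _ ->; rewrite subrr mulr0 addr0.
by apply: ler_sum => i _; apply: Phi_tangent => //; apply: pmf_le1.
Qed.

Definition bb : R := 1 - (N%:R)^-1.
Definition dd : R := (N%:R)^-1 * (Nsub%:R)^-1.
Definition Gord (z : 'I_T -> bool) := \sum_(k : 'I_T) \sum_(0 <= a < k.+1)
   \prod_(t : 'I_T | (a <= t)%N && (t < k)%N) (bb + dd * (z t : nat)%:R).

Lemma sum_sigma (sigma : blocking Nsub T) t :
  (\sum_j (sigma j t : nat))%N = (Nsub - #|[set j | ~~ sigma j t]|)%N.
Proof.
have h1 : (\sum_j (~~ sigma j t : nat))%N = #|[set j | ~~ sigma j t]|.
  rewrite -sum1_card [RHS]big_mkcond /=; apply: eq_bigr => j _; rewrite inE.
  by case: (sigma j t).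
have h2 : (\sum_j (sigma j t : nat) + \sum_j (~~ sigma j t : nat))%N = Nsub.
  rewrite -big_split /= (eq_bigr (fun _ => 1%N)); last by move=> j _; case: (sigma j t).
  by rewrite sum1_card card_ord.
lia.
Qed.

Lemma Delta_unif (sigma : blocking Nsub T) : (0 < N)%N -> (0 < Nsub)%N ->
  (forall t, #|[set j | ~~ sigma j t]| <= 1)%N ->
  Delta T (uniform_pmf 'I_N) (uniform_pmf 'I_Nsub) sigma
  = (T%:R)^-1 * Gord (fun t => (0 < #|[set j | ~~ sigma j t]|)%N).
Proof.
move=> hN hNs hf; rewrite /Delta /Gord; congr (_ * _); apply: eq_bigr => k _.
rewrite (eq_bigr (fun i => \sum_(0 <= a < k.+1) \prod_(t : 'I_T | (a <= t)%N && (t < k)%N)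
   (bb + dd * ((0 < #|[set j | ~~ sigma j t]|)%N : nat)%:R))); last first.
  move=> i _; rewrite exp_age_eq; first last.
  - exact: ltnW (ltn_ord k).
  - by apply: unif_sum; rewrite card_ord.
  - by apply: unif_sum; rewrite card_ord.
  apply: eq_big_nat => a _; apply: eq_bigr => t _.
  rewrite /uniform_pmf !card_ord -big_distrr /= -natr_sum sum_sigma.
  have hc := hf t.
  have hle : (#|[set j | ~~ sigma j t]| <= Nsub)%N.
    by apply: leq_trans (max_card _) _; rewrite card_ord.
  rewrite natrB // /bb /dd.
  have hNs' : (Nsub%:R : R) != 0 by rewrite pnatr_eq0 -lt0n.
  move: #|[set j | ~~ sigma j t]| hc hle => c hc hle.
  have hN' : (N%:R : R) != 0 by rewrite pnatr_eq0 -lt0n.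
  by case: c hc hle => [|[|c]] //= _ _; field; rewrite hNs' hN'.
rewrite sumr_const card_ord mulrnAr -mulrnAl -mulr_natr mulVf ?mul1r //.
by rewrite pnatr_eq0 -lt0n.
Qed.

Lemma DS_unif alpha : (0 < N)%N -> (0 < Nsub)%N ->
  Delta_sigma' T alpha (uniform_pmf 'I_N) (uniform_pmf 'I_Nsub)
  = (T%:R)^-1 * Gord (in_window alpha).
Proof.
move=> hN hNs; rewrite DS_eq //; try (by apply: unif_sum; rewrite card_ord).
congr (_ * _); rewrite /uniform_pmf card_ord sumr_const card_ord mulrnAr -mulrnAl -mulr_natr mulVf ?mul1r;
  last by rewrite pnatr_eq0 -lt0n.
rewrite /Phi /Gord; apply: eq_bigr => k _; apply: eq_big_nat => a _; apply: eq_bigr => t _.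
rewrite /cc /bb /dd.
have hNs' : (Nsub%:R : R) != 0 by rewrite pnatr_eq0 -lt0n.
have hN' : (N%:R : R) != 0 by rewrite pnatr_eq0 -lt0n.
by field; rewrite ?hNs' ?hN'.
Qed.

End Prob.

Lemma Gord_G (R : realFieldType) N Nsub T' (z : 'I_T'.+1 -> bool) :
  Gord R N Nsub z = Gc (bb R N) (dd R N Nsub) (fun s => z (inord s)) T'.
Proof.
rewrite /Gord /Gc -(big_mkord xpredT (fun c => \sum_(0 <= a < c.+1)
   \prod_(t : 'I_T'.+1 | (a <= t)%N && (t < c)%N) (bb R N + dd R N Nsub * (z t : nat)%:R))).
apply: eq_big_nat => c /andP[_ hc]; rewrite -A_sum; apply: eq_big_nat => a _.
rewrite /Pc (prod_nat_ord _ a (ltnW hc)).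
by apply: eq_bigr => t _; rewrite /xs inord_val.
Qed.

Lemma card_blk Nsub T (sigma : blocking Nsub T) t :
  #|[set j | ~~ sigma j t]| = (\sum_j (~~ sigma j t : nat))%N.
Proof.
rewrite -sum1_card [LHS]big_mkcond /=; apply: eq_bigr => j _; rewrite inE.
by case: (sigma j t).
Qed.

Unset Implicit Arguments.
Set Strict Implicit.

Theorem theorem13 (R : realFieldType) (N Nsub T : nat) (alpha : R)
  (hN : (0 < N)%N) (hNsub : (2 <= Nsub)%N)
  (ha0 : 0 < alpha) (ha1 : alpha < 1)
  (haT : exists m : nat, alpha * T%:R = m%:R)
  (heven : exists k : nat, (1 - alpha) * T%:R = (2 * k)%:R) :
  (forall (p : 'I_N -> R) (q : 'I_Nsub -> R), is_pmf p -> is_pmf q ->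
     Delta_sigma' T alpha (uniform_pmf 'I_N) (uniform_pmf 'I_Nsub)
     <= Delta_sigma' T alpha p q)
  /\
  (forall sigma : blocking Nsub T, feasible alpha sigma ->
     Delta T (uniform_pmf 'I_N) (uniform_pmf 'I_Nsub) sigma
     <= Delta_sigma' T alpha (uniform_pmf 'I_N) (uniform_pmf 'I_Nsub)).
Proof.
have hNs : (0 < Nsub)%N by lia.
split; first by move=> p q hp hq; apply: part1.
move=> sigma [hsum hone].
rewrite Delta_unif // DS_unif //.
apply: ler_wpM2l; first by rewrite invr_ge0 ler0n.
case: T sigma hsum hone haT heven => [|T'] sigma hsum hone [m hm] [k0 hk].
  by rewrite /Gord !big_ord0.
have hT : (T'.+1 = 2 * k0 + m)%N.
  apply/eqP; rewrite -(eqr_nat R) natrD -hk -hm; apply/eqP; ring.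
have hk0 : (0 < k0)%N.
  rewrite lt0n; apply/negP => /eqP e; move: hk; rewrite e muln0 => h0.
  have : 0 < (1 - alpha) * (T'.+1)%:R by apply: mulr_gt0; [rewrite subr_gt0 | rewrite ltr0n].
  by rewrite h0 ltxx.
rewrite !Gord_G.
have hNr : (0 : R) < N%:R by rewrite ltr0n.
have hNsr : (1 : R) <= Nsub%:R by rewrite ler1n.
have hb0 : 0 <= bb R N by rewrite /bb subr_ge0 invf_le1 // ler1n.
have hd0 : 0 <= dd R N Nsub by rewrite /dd mulr_ge0 // invr_ge0 ler0n.
have hg1 : bb R N + dd R N Nsub <= 1.
  have : (N%:R : R)^-1 * (Nsub%:R)^-1 <= (N%:R)^-1.
    rewrite ger_pMr ?invr_gt0 // invf_le1 //.
    by apply: lt_le_trans hNsr.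
  rewrite /bb /dd; lra.
have hMc : Mc k0 m = T' by rewrite /Mc -hT.
have -> : Gc (bb R N) (dd R N Nsub) (fun s => in_window alpha (inord s : 'I_T'.+1)) T'
    = Gc (bb R N) (dd R N Nsub) (wc k0 m) T'.
  apply: Gc_ext => s hs.
  have e1 : (1 - alpha) * (T'.+1)%:R / 2 = k0%:R by rewrite hk natrM; field.
  have e2 : (1 + alpha) * (T'.+1)%:R / 2 = (k0 + m)%:R.
    have -> : (1 + alpha) * (T'.+1)%:R = (1 - alpha) * (T'.+1)%:R + 2 * (alpha * (T'.+1)%:R) by ring.
    by rewrite hk hm natrD natrM; field.
  rewrite /in_window e1 e2 inordK; last by lia.
  by rewrite /wc ler_nat natr1 ler_nat.
have := @core_main _ _ _ hb0 hd0 hg1 k0 m hk0 (fun s => (0 < #|[set j | ~~ sigma j (inord s : 'I_T'.+1)]|)%N).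
rewrite hMc; apply.
have h1 : (cnt (fun s => (0 < #|[set j | ~~ sigma j (inord s : 'I_T'.+1)]|)%N) 0 T'
   <= \sum_(t : 'I_T'.+1) #|[set j | ~~ sigma j t]|)%N.
  apply: leq_trans (_ : cnt (fun s => (0 < #|[set j | ~~ sigma j (inord s : 'I_T'.+1)]|)%N) 0 T'.+1 <= _)%N.
    by rewrite cnt_recr // leq_addr.
  rewrite /cnt big_mkord; apply: leq_sum => t _; rewrite inord_val.
  by case: #|_|.
apply: leq_trans h1 _.
have : ((\sum_j \sum_t (~~ sigma j t : nat))%N%:R <= (m%:R : R)) by rewrite -hm.
rewrite ler_nat => h2; apply: leq_trans h2.
rewrite exchange_big /=; apply: leq_sum => t _.
by rewrite card_blk.
Qed.
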